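(* Let $S$ be a condensed space. If $I\subseteq\mathscr{C}(S)[x_1,\dots,x_n]$ is a Groebner ideal with Groebner basis $G=\{f_1,\dots,f_k\}$, then for any set $A\subseteq S$ of measure zero, $G|_{S-A}=\{f_1|_{S-A},\dots,f_k|_{S-A}\}$ is a Groebner basis of the ideal $I(S-A)\subseteq\mathscr{C}(S-A)[x_1,\dots,x_n]$.
   Context: $S\subseteq\mathbb{R}^m$ (Euclidean subspace topology). $\mathscr{P}(S)$ is the ring of restrictions to $S$ of complex polynomials in the $m$ real coordinates; a real algebraic subset of $S$ is the common zero set in $S$ of finitely many elements of $\mathscr{P}(S)$; $S$ is condensed if every real algebraic subset $V\ne S$ is nowhere dense in $S$. A set $A\subseteq S$ has measure zero if $A\neq S$ and $A=\bigcap_{i\ge1}\bigcup_{j\ge1}V_{ij}$ for some real algebraic subsets $V_{ij}$ of $S$. For $U\subseteq S$, $\mathscr{C}(U)$ denotes continuous complex-valued functions on $U$, and $I(U)$ is the ideal of $\mathscr{C}(U)[x_1,\dots,x_n]$ generated by restrictions to $U$ of elements of $I$. Fix a monomial ordering. For nonzero $h=\sum_\alpha a_\alpha x^\alpha\in\mathscr{C}(U)[x_1,\dots,x_n]$, let $\alpha_1$ be the largest multi-index with $a_{\alpha_1}$ not identically zero; $LT(h)=a_{\alpha_1}x^{\alpha_1}$, $LC(h)=a_{\alpha_1}$. A finite generating set $\{g_1,\dots,g_k\}$ of an ideal $J\subseteq\mathscr{C}(U)[x_1,\dots,x_n]$ is a Groebner basis if $\langle LT(g_1),\dots,LT(g_k)\rangle=\langle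 LT(J)\rangle$ (ideal generated by leading terms of all elements of $J$) and each $LC(g_i)$ is nowhere vanishing on $U$; $J$ is a Groebner ideal if it has a Groebner basis. *)

(* Defs.v *)
From HB Require Import structures.
From mathcomp Require Import all_boot all_order all_algebra.
From mathcomp Require Import mpoly.
From mathcomp Require Import all_classical all_reals topology normedtype.
From mathcomp.real_closed Require Import complex.
Import Order.TTheory GRing.Theory Num.Theory ComplexField.
Import numFieldNormedType.Exports.

Set Implicit Arguments.
Unset Strict Implicit.
Unset Printing Implicit Defensive.

Local Open Scope ring_scope.
Local Open Scope classical_set_scope.

(* The complex numbers over R, as a numClosedFieldType; through this
   structure they get the topology induced by the complex modulus. *)
Definition Cplx (R : realType) : numClosedFieldType := R[i].

Section GroebnerDefs.
Variables (R : realType) (m n : nat).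

Definition real_eval (p : mpoly.mpoly m (Cplx R)) (x : 'rV[R]_m) : Cplx R :=
  mpoly.meval (fun j => ((x ord0 j)%:C)%C : Cplx R) p.

(* V is a real algebraic subset of S: the common zero set in S of finitely
   many elements of P(S) (restrictions to S of complex polynomials). *)
Definition real_algebraic (S V : set 'rV[R]_m) : Prop :=
  exists ps : seq (mpoly.mpoly m (Cplx R)),
    V = [set x | S x /\ (forall p : mpoly.mpoly m (Cplx R), p \in ps -> real_eval p x = 0)].

(* V is nowhere dense in S (subspace topology): the interior in S of the
   closure of V in S is empty.  Relatively open sets of S are O `&` S with O
   open, and the closure of V in S is closure V `&` S. *)
Definition nowhere_dense_in (S V : set 'rV[R]_m) : Prop :=
  ~ (exists O : set 'rV[R]_m,
        [/\ open O, (O `&` S) !=set0 & (O `&` S) `<=` closure V]).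

Definition condensed (S : set 'rV[R]_m) : Prop :=
  forall V, real_algebraic S V -> V <> S -> nowhere_dense_in S V.

Definition measure_zero (S A : set 'rV[R]_m) : Prop :=
  A <> S /\
  exists V : nat -> nat -> set 'rV[R]_m,
    (forall i j, real_algebraic S (V i j)) /\
    A = \bigcap_i \bigcup_j V i j.

(* An element of C(U)[x_1..x_n] is represented by a polynomial whose
   coefficients are functions 'rV[R]_m -> Cplx R that are continuous on U
   (subspace topology); two such polynomials denote the same element iff
   their coefficients agree on U (only the restriction to U matters). *)
Definition cpoly := mpoly.mpoly n ('rV[R]_m -> Cplx R).
Definition monom := mpoly.multinom n.

Definition inC (U : set 'rV[R]_m) (p : cpoly) : Prop :=
  forall a : monom, {within U, continuous (mpoly.mcoeff a p)}.

Definition peq (U : set 'rV[R]_m) (p q : cpoly) : Prop :=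
  forall (a : monom) x, U x -> mpoly.mcoeff a p x = mpoly.mcoeff a q x.

Definition nz_on (U : set 'rV[R]_m) (f : 'rV[R]_m -> Cplx R) : Prop :=
  exists2 x, U x & f x <> 0.

Definition ideal_gen (U : set 'rV[R]_m) (X : set cpoly) : set cpoly :=
  fun p => inC U p /\
    exists s : seq (cpoly * cpoly),
      (forall hg, hg \in s -> inC U hg.1 /\ X hg.2) /\
      peq U p (\sum_(hg <- s) hg.1 * hg.2).

Definition is_ideal (U : set 'rV[R]_m) (J : set cpoly) : Prop :=
  [/\ (forall p, J p -> inC U p),
      (forall p q, J p -> inC U q -> peq U p q -> J q),
      J 0,
      (forall p q, J p -> J q -> J (p + q)) &
      (forall h p, inC U h -> J p -> J (h * p))].

Definition monomial_order (le : rel monom) : Prop :=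
  [/\ [/\ reflexive le, antisymmetric le, transitive le & total le],
      (forall a b c : monom, le a b -> le (mpoly.mnm_add a c) (mpoly.mnm_add b c)) &
      well_founded (fun a b : monom => le a b && (a != b))].

Definition is_LM (le : rel monom) (U : set 'rV[R]_m) (h : cpoly) (a : monom) : Prop :=
  nz_on U (mpoly.mcoeff a h) /\
  (forall b, nz_on U (mpoly.mcoeff b h) -> le b a).

Definition LT_of (le : rel monom) (U : set 'rV[R]_m) (h t : cpoly) : Prop :=
  exists a, is_LM le U h a /\ t = mpoly.mcoeff a h *: @mpoly.mpolyX n _ a.

Definition groebner_basis (le : rel monom) (U : set 'rV[R]_m)
    (J : set cpoly) (G : seq cpoly) : Prop :=
  [/\ (forall g, g \in G -> inC U g),
      (forall p, J p <-> ideal_gen U [set g | g \in G] p),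
      (forall p, ideal_gen U [set t | exists2 g, g \in G & LT_of le U g t] p <->
                 ideal_gen U [set t | exists h, J h /\ LT_of le U h t] p) &
      (forall g, g \in G -> exists a, is_LM le U g a /\
                   (forall x, U x -> mpoly.mcoeff a g x <> 0))].

Definition groebner_ideal (le : rel monom) (U : set 'rV[R]_m) (J : set cpoly) : Prop :=
  is_ideal U J /\ exists G, groebner_basis le U J G.

End GroebnerDefs.

(* Main.v *)
Require Import Defs.
From HB Require Import structures.
From mathcomp Require Import all_boot all_order all_algebra.
From mathcomp Require Import mpoly.
From mathcomp Require Import all_classical all_reals topology normedtype.
From mathcomp.real_closed Require Import complex.
Import Order.TTheory GRing.Theory Num.Theory ComplexField.
Import numFieldNormedType.Exports.
Local Open Scope ring_scope.
Local Open Scope classical_set_scope.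

Section Aux.
Variables (R : realType) (m n : nat).
Implicit Types (U V : set 'rV[R]_m) (f g : 'rV[R]_m -> Cplx R).
Local Notation cp := (cpoly R m n).
Implicit Types (p q : cp).

Lemma wD U f g : {within U, continuous f} -> {within U, continuous g} -> {within U, continuous (f + g)}.
Proof. move=> hf hg x. have := continuousD (hf x) (hg x). exact. Qed.
Lemma wM U f g : {within U, continuous f} -> {within U, continuous g} -> {within U, continuous (f * g)}.
Proof. move=> hf hg x. have := continuousM (hf x) (hg x). exact. Qed.
Lemma wC U (c : Cplx R) : {within U, continuous (fun _ => c)}.
Proof. apply: continuous_subspaceT. exact: cst_continuous. Qed.
Lemma wN U f : {within U, continuous f} -> {within U, continuous (fun y => - f y)}.
Proof. move=> hf x. have := continuousN (hf x). exact. Qed.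
Lemma wV U f : {within U, continuous f} -> (forall x, U x -> f x != 0) -> {within U, continuous (fun y => (f y)^-1)}.
Proof. move=> hf hn. rewrite /from_subspace. rewrite continuous_subspace_in. move=> x; rewrite inE => Ux.
have := continuousV (hn _ Ux) (hf x). exact. Qed.

Lemma wsum U (I : Type) (r : seq I) (P : pred I) (F : I -> 'rV[R]_m -> Cplx R) :
  (forall i, P i -> {within U, continuous (F i)}) ->
  {within U, continuous (\sum_(i <- r | P i) F i)}.
Proof. move=> hF; apply: (big_ind (fun h => {within U, continuous h})).
- have := wC U 0. exact.
- exact: wD.
- exact: hF.
Qed.

Definition evf (x : 'rV[R]_m) (f : 'rV[R]_m -> Cplx R) : Cplx R := f x.
Lemma evf_add x : additive (evf x). Proof. by move=> f g. Qed.
HB.instance Definition _ x := GRing.isAdditive.Build _ _ (evf x) (evf_add x).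
Lemma evf_mul x : multiplicative (evf x). Proof. by split. Qed.
HB.instance Definition _ x := GRing.isMultiplicative.Build _ _ (evf x) (evf_mul x).
Definition evp x (p : cp) : {mpoly (Cplx R)[n]} := map_mpoly (evf x) p.
Lemma evpM x p q : evp x (p * q) = evp x p * evp x q. Proof. by rewrite /evp rmorphM. Qed.
Lemma evpD x p q : evp x (p + q) = evp x p + evp x q. Proof. by rewrite /evp rmorphD. Qed.
Lemma evp_sum x (I : Type) (r : seq I) (P : pred I) (F : I -> cp) :
  evp x (\sum_(i <- r | P i) F i) = \sum_(i <- r | P i) evp x (F i).
Proof. by rewrite /evp rmorph_sum. Qed.
Lemma evpE x p a : (evp x p)@_a = (p@_a) x. Proof. by rewrite /evp mcoeff_map_mpoly. Qed.

Lemma peqE U p q : peq U p q <-> forall x, U x -> evp x p = evp x q.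
Proof. split=> h.
- move=> x Ux. apply/mpolyP => a. exact: (etrans (evpE x p a) (etrans (h a x Ux) (esym (evpE x q a)))).
- move=> a x Ux. exact: (etrans (esym (evpE x p a)) (etrans (congr1 (mcoeff a) (h x Ux)) (evpE x q a))).
Qed.
Lemma inC_sub U V p : U `<=` V -> inC V p -> inC U p.
Proof. move=> sUV hp a; exact: continuous_subspaceW sUV (hp a). Qed.

Lemma inC_add U p q : inC U p -> inC U q -> inC U (p + q).
Proof. move=> hp hq a; rewrite mcoeffD; exact: wD. Qed.

Lemma inC_mul U p q : inC U p -> inC U q -> inC U (p * q).
Proof. move=> hp hq a; rewrite mcoeffM; apply: wsum => k _; exact: wM. Qed.

Lemma inC0 U : inC U (0 : cp).
Proof. move=> a; rewrite mcoeff0; have := wC U 0. exact. Qed.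

Lemma inC_scaleX U f (e : monom n) : {within U, continuous f} -> inC U (f *: 'X_[e] : cp).
Proof. move=> hf a; rewrite mcoeffZ mcoeffX; case: eqP => _.
- by rewrite mulr1.
- rewrite mulr0; have := wC U 0. exact.
Qed.


Lemma inC1 U : inC U (1 : cp).
Proof. move=> a. rewrite mcoeff1. case: eqP => _. (have := wC U 1; exact). (have := wC U 0; exact). Qed.
Lemma ig_mono U X Y p : X `<=` Y -> ideal_gen U X p -> ideal_gen U Y p.
Proof. move=> XY [hp [s [hs he]]]. split; first exact: hp. exists s. split; last exact: he.
move=> hg hin. have [h1 h2] := hs hg hin. split; first exact: h1. exact: XY. Qed.

Lemma ig_sub U V X p : U `<=` V -> ideal_gen V X p -> ideal_gen U X p.
Proof. move=> UV [hp [s [hs he]]]; split; first exact: inC_sub hp.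
exists s; split.
- move=> hg hin. have [h1 h2] := hs hg hin. split; last exact: h2. exact: inC_sub h1.
- move=> a x Ux; exact: he a x (UV _ Ux).
Qed.

Lemma ig_in U X p : inC U p -> X p -> ideal_gen U X p.
Proof. move=> hp Xp; split; first exact: hp. exists [:: (1, p)]; split.
- move=> hg; rewrite mem_seq1 => /eqP -> /=; split; [exact: inC1 | exact: Xp].
- apply/peqE => x Ux. rewrite big_seq1 /=. by rewrite mul1r.
Qed.
Definition sumP (s : seq (cp * cp)) : cp := foldr (fun hg acc => hg.1 * hg.2 + acc) 0 s.
Lemma sumPE (s : seq (cp * cp)) : \sum_(hg <- s) hg.1 * hg.2 = sumP s.
Proof. elim: s => [|hg s IH]; first by rewrite big_nil. by rewrite big_cons IH. Qed.
Lemma sumP_cat s1 s2 : sumP (s1 ++ s2) = sumP s1 + sumP s2.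
Proof. elim: s1 => [|hg s IH] /=; first by rewrite add0r. by rewrite IH addrA. Qed.
Lemma sumP_map h t : sumP [seq (h * c.1, c.2) | c <- t] = h * sumP t.
Proof. elim: t => [|c t IH] /=; first by rewrite mulr0. by rewrite IH mulrDr mulrA. Qed.
Lemma ig_trans_aux U X Y (s : seq (cp * cp)) : (forall y, Y y -> ideal_gen U X y) ->
  (forall hg, hg \in s -> inC U hg.1 /\ Y hg.2) ->
  exists s' : seq (cp * cp), (forall hg, hg \in s' -> inC U hg.1 /\ X hg.2) /\
   forall x, U x -> evp x (sumP s) = evp x (sumP s').
Proof. move=> hY.
elim: s => [|[h y] s IH] hs.
  exists [::]; split; last by []. move=> hg; by rewrite in_nil.
have [hh Yy] := hs _ (mem_head _ _). simpl in hh, Yy.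
have [s0 [hs0 he0]] := IH (fun hg hin => hs hg (introT orP (or_intror hin))).
have [_ [t [ht hte]]] := hY _ Yy.
exists ([seq (h * c.1, c.2) | c <- t] ++ s0); split.
- move=> hg; rewrite mem_cat => /orP [/mapP [c ct ->] /=| /hs0 hh0]; last exact: hh0.
  have [c1 c2] := ht _ ct. split; [exact: (inC_mul U h c.1 hh c1) | exact: c2].
- move=> x Ux. rewrite sumPE in hte. have hte2 := (iffLR (peqE U y _) hte).
  rewrite sumP_cat sumP_map /=.
  apply: (etrans (evpD x _ _)). apply: esym; apply: (etrans (evpD x _ _)). apply: esym.
  apply: (f_equal2 +%R); last exact: (he0 x Ux).
  apply: (etrans (evpM x h y)). apply: esym; apply: (etrans (evpM x h _)). apply: esym.
  exact: (congr1 (fun z => evp x h * z) (hte2 x Ux)).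
Qed.
Lemma ig_trans U X Y p : (forall y, Y y -> ideal_gen U X y) -> ideal_gen U Y p -> ideal_gen U X p.
Proof. move=> hY [hp [s [hs he]]]; split; first exact: hp.
have [s' [hs' he']] := ig_trans_aux U X Y s hY hs.
exists s'; split; first exact: hs'. rewrite sumPE. rewrite sumPE in he.
apply/(iffRL (peqE U p _)) => x Ux. have he2 := (iffLR (peqE U p _) he).
exact: (etrans (he2 x Ux) (he' x Ux)).
Qed.
Lemma coefMX_le (p : cp) (e d : monom n) : (e <= d)%MM -> (p * 'X_[e])@_d = p@_(d - e)%MM.
Proof. move=> hed. have E : d = (e + (d - e))%MM by rewrite addmC submK.
rewrite {1}E. exact: mcoeffMX. Qed.

Lemma coefMX_nle (p : cp) (e d : monom n) : ~~ (e <= d)%MM -> (p * 'X_[e])@_d = 0.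
Proof. move=> hed. apply/eqP; rewrite mcoeff_eq0 (perm_mem (msuppMX p e)).
apply/mapP => -[m' _ E]; move/negP: hed; apply; rewrite E; exact: lem_addr. Qed.

Lemma scaleXM (c : 'rV[R]_m -> Cplx R) (e : monom n) (g : cp) (d : monom n) (y : 'rV[R]_m) :
  (((c *: 'X_[e]) * g)@_d) y = c y * ((g * 'X_[e])@_d) y.
Proof. rewrite -scalerAl commr_mpolyX mcoeffZ. by []. Qed.
Lemma not_nz U f : ~ nz_on U f -> forall y, U y -> f y = 0.
Proof. move=> hn y Uy; apply/eqP; apply/negPn/negP => hne; apply: hn; exists y; [exact: Uy | exact/eqP]. Qed.

Lemma LT_ig U (le : rel (monom n)) (G : seq cp) p a x :
  ideal_gen U [set t | exists2 g, g \in G & LT_of le U g t] p -> U x -> p@_a x != 0 ->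
  exists2 g, g \in G & exists a', is_LM le U g a' /\ (a' <= a)%MM.
Proof.
move=> [hp [s [hs he]]] Ux hpa.
have [hyes|hno] := pselect (exists2 g, g \in G & exists a', is_LM le U g a' /\ (a' <= a)%MM).
  exact: hyes.
exfalso; move/negP: hpa; apply.
have claim : forall s' : seq (cp * cp), (forall hg, hg \in s' -> inC U hg.1 /\ [set t | exists2 g, g \in G & LT_of le U g t] hg.2) -> ((sumP s')@_a) x = 0.
  elim => [|[h t] s' IH] hs' /=; first by rewrite mcoeff0.
  rewrite mcoeffD. change (((h * t)@_a) x + ((sumP s')@_a) x = 0). have [_ [g gG [a' [hLM Et]]]] := hs' (h, t) (mem_head _ _). simpl in Et. rewrite Et.
  have -> : (sumP s')@_a x = 0 by apply: IH => hg hin; apply: hs'; rewrite in_cons hin orbT.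
  rewrite -scalerAr mcoeffZ addr0.
  have [hle|hnle] := boolP (a' <= a)%MM.
    by exfalso; apply: hno; exists g; [exact: gG | exists a'; split].
  rewrite (coefMX_nle h a' a hnle). rewrite mulr0. by [].
rewrite (he a x Ux) sumPE claim; first by []. exact: hs.
Qed.
Lemma seq_max (le : rel (monom n)) : transitive le -> total le ->
  forall (s : seq (monom n)) d0, d0 \in s -> exists2 b, b \in s & forall d, d \in s -> le d b.
Proof. move=> tr to; elim => [|c s IH] d0 hd0; first by rewrite in_nil in hd0.
case: s IH hd0 => [|c' s'] IH hd0.
  exists c; first exact: mem_head. move=> d; rewrite mem_seq1 => /eqP ->. by case/orP: (to c c).
have [b bin hb] := IH c' (mem_head _ _).
case/orP: (to c b) => hcb.
  exists b; first by rewrite in_cons bin orbT.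
  move=> d; rewrite in_cons => /orP [/eqP -> | hd]; [exact: hcb | exact: hb].
exists c; first exact: mem_head.
move=> d; rewrite in_cons => /orP [/eqP -> | hd]; first by case/orP: (to c c).
exact: tr (hb d hd) hcb.
Qed.

Lemma nz_msupp U (h : cp) d : nz_on U (h@_d) -> d \in msupp h.
Proof. move=> [y Uy hy]. rewrite mcoeff_msupp. apply/eqP => E. apply: hy. rewrite E. by []. Qed.

Lemma LM_exists (le : rel (monom n)) U (h : cp) a : transitive le -> total le -> nz_on U (h@_a) -> exists b, is_LM le U h b.
Proof. move=> tr to ha.
pose s := [seq d <- msupp h | `[< nz_on U (h@_d) >]].
have ains : a \in s by rewrite mem_filter (nz_msupp U h a ha) andbT; apply/asboolP.
have [b bin hb] := seq_max le tr to s a ains.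
exists b; split.
  by move: bin; rewrite mem_filter => /andP [/asboolP hh _].
move=> d hd; apply: hb. by rewrite mem_filter (nz_msupp U h d hd) andbT; apply/asboolP.
Qed.

Lemma LM_unique (le : rel (monom n)) U (h : cp) a b : antisymmetric le -> is_LM le U h a -> is_LM le U h b -> a = b.
Proof. move=> anti [ha hla] [hb hlb]. apply: anti. by rewrite (hla _ hb) (hlb _ ha). Qed.
Lemma key (le : rel (monom n)) S (I : set cp) (G : seq cp) :
  monomial_order le -> is_ideal S I -> groebner_basis le S I G ->
  forall x, S x -> forall b H, I H -> is_LM le S H b -> forall a, H@_a x != 0 ->
  (forall d, H@_d x != 0 -> le d a) ->
  exists2 g, g \in G & exists a', is_LM le S g a' /\ (a' <= a)%MM.
Proof.
move=> [[rfl anti tr to] mono wf] [hIc hIeq hI0 hIadd hImul] [hG1 hG2 hG3 hG4] x Sx b.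
elim/(well_founded_ind wf): b => b IH H hH hLM a ha hd.
have [hLM1 hLM2] := hLM.
have hHC : inC S H := hIc H hH.
have nza : nz_on S (H@_a) by exists x; [exact: Sx | exact/eqP].
have lab : le a b := hLM2 a nza.
have hLTin : ideal_gen S [set t | exists2 g, g \in G & LT_of le S g t] (H@_b *: 'X_[b]).
  apply/hG3. apply: (ig_in S _ _ (inC_scaleX S (H@_b) b (hHC b))).
  exists H; split; [exact: hH | exists b; split; [exact: hLM | by []]].
have [y Sy hy] := hLM1.
have coefLT : forall y', ((H@_b *: 'X_[b] : cp)@_b) y' = (H@_b) y'.
  by move=> y'; rewrite mcoeffZ mcoeffX eqxx mulr1.
have [g gG [aj [hLMg ajb]]] := LT_ig S le G _ b y hLTin Sy (introN eqP (fun E => hy (etrans (esym (coefLT y)) E))).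
case: (eqVneq b a) => [Eba | nba].
  exists g; first exact: gG. exists aj; split; first exact: hLMg. by rewrite -Eba.
have Hbx : (H@_b) x = 0.
  apply/eqP; apply/negPn/negP => hb. have lba := hd b hb. move/negP: nba; apply.
  apply/eqP; apply: anti. by rewrite lba lab.
have [a'' [hLM'' hnv]] := hG4 g gG.
have Ea : a'' = aj := LM_unique le S g a'' aj anti hLM'' hLMg.
rewrite Ea in hnv.
have hnv' : forall y', S y' -> (g@_aj) y' != 0 by move=> y' Sy'; apply/eqP; exact: hnv.
have gC : inC S g := hG1 g gG.
pose c := fun y' => - ((H@_b) y' * ((g@_aj) y')^-1).
pose e := (b - aj)%MM.
pose H' := H + (c *: 'X_[e]) * g.
have gI : I g. apply/hG2. apply: (ig_in S _ _ gC). exact: gG.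
have hcC : {within S, continuous c}.
  have := wN S _ (wM S _ _ (hHC b) (wV S (g@_aj) (gC aj) hnv')). exact.
have H'I : I H' := hIadd _ _ hH (hImul _ _ (inC_scaleX S c e hcC) gI).
have coefH' : forall d y', (H'@_d) y' = (H@_d) y' + c y' * ((g * 'X_[e])@_d) y'.
  move=> d y'; rewrite /H' mcoeffD.
  change ((H@_d) y' + (((c *: 'X_[e]) * g)@_d) y' = (H@_d) y' + c y' * ((g * 'X_[e])@_d) y').
  by rewrite scaleXM.
have cx : c x = 0 by rewrite /c Hbx mul0r oppr0.
have H'x : forall d, (H'@_d) x = (H@_d) x by move=> d; rewrite coefH' cx mul0r addr0.
have Eb : b = (e + aj)%MM by rewrite /e submK.
have Gb : (g * 'X_[e])@_b = g@_aj by rewrite {1}Eb mcoeffMX.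
have nzb : forall d, nz_on S (H'@_d) -> le d b && (d != b).
  move=> d [y' Sy' hy'].
  have [ldb|nldb] := boolP (le d b).
  - apply/andP; split; first exact: isT. apply/eqP => Edb. apply: hy'. rewrite Edb coefH' Gb /c mulNr -mulrA mulVf.
      by rewrite mulr1 subrr.
    exact: hnv'.
  - exfalso. apply: hy'. rewrite coefH'.
    have H0 : (H@_d) y' = 0 := not_nz S _ (fun hnz => negP nldb (hLM2 d hnz)) y' Sy'.
    have G0 : ((g * 'X_[e])@_d) y' = 0.
      have [led|nled] := boolP (e <= d)%MM.
      + rewrite (coefMX_le g e d led). apply: (not_nz S _ _ y' Sy') => hnz. apply: (negP nldb).
        have hm := mono _ _ e ((proj2 hLMg) _ hnz).
        have E1 : mpoly.mnm_add (d - e)%MM e = d := submK led.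
        have E2 : mpoly.mnm_add aj e = b by rewrite Eb addmC.
        rewrite E1 E2 in hm. exact: hm.
      + rewrite (coefMX_nle g e d nled). by [].
    by rewrite H0 G0 mulr0 addr0.
have nza' : nz_on S (H'@_a) by exists x; [exact: Sx | rewrite H'x; exact/eqP].
have [b' hLM'] := LM_exists le S H' a tr to nza'.
apply: (IH b' _ H' H'I hLM' a).
- exact: nzb b' (proj1 hLM').
- by rewrite H'x.
- move=> d; rewrite H'x; exact: hd.
Qed.
Definition lcf (x : 'rV[R]_m) (f : 'rV[R]_m -> Cplx R) : 'rV[R]_m -> Cplx R := fun _ => f x.
Lemma lcf_add x : additive (lcf x). Proof. by move=> f g. Qed.
HB.instance Definition _ x := GRing.isAdditive.Build _ _ (lcf x) (lcf_add x).
Definition lift x (q : cp) : cp := map_mpoly (lcf x) q.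
Lemma lift_coef x q a : (lift x q)@_a = fun _ => (q@_a) x.
Proof. exact: mcoeff_map_mpoly. Qed.
Lemma lift_inC U x q : inC U (lift x q).
Proof. move=> a. rewrite lift_coef. exact: wC. Qed.
Lemma lift_ev x q : evp x (lift x q) = evp x q.
Proof. apply/mpolyP => a.
exact: (etrans (evpE x _ a) (etrans (congr1 (fun f => f x) (lift_coef x q a)) (esym (evpE x q a)))).
Qed.
Lemma lift_sum S (I : set cp) x (s : seq (cp * cp)) : is_ideal S I ->
  (forall hg, hg \in s -> I hg.2) ->
  I (sumP [seq (lift x c.1, c.2) | c <- s]) /\
  evp x (sumP [seq (lift x c.1, c.2) | c <- s]) = evp x (sumP s).
Proof. move=> [hIc hIeq hI0 hIadd hImul].
elim: s => [|[q p] s IH] hs /=.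
  split; [exact: hI0 | by []].
have [IH1 IH2] := IH (fun hg hin => hs hg (introT orP (or_intror hin))).
have Ip : I p := hs (q, p) (mem_head _ _).
split.
  exact: (hIadd _ _ (hImul _ _ (lift_inC S x q) Ip) IH1).
apply: (etrans (evpD x _ _)). apply: esym; apply: (etrans (evpD x _ _)). apply: esym.
apply: (f_equal2 +%R); last exact: IH2.
apply: (etrans (evpM x _ _)). apply: esym; apply: (etrans (evpM x _ _)). apply: esym.
exact: (congr1 (fun z => z * evp x p) (lift_ev x q)).
Qed.
Lemma main_aux (le : rel (monom n)) (S : set 'rV[R]_m) (I : set cp) (G : seq cp) :
  monomial_order le ->
  condensed S ->
  is_ideal S I ->
  groebner_basis le S I G ->
  forall A : set 'rV[R]_m, measure_zero S A ->
    groebner_basis le (S `\` A) (ideal_gen (S `\` A) I) G.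
Proof.
move=> hle hcond hI hG A [hAS [V [hV EA]]].
have US : (S `\` A) `<=` S by move=> y [].
have [y0 Uy0] : exists y, (S `\` A) y.
  have [yes|no] := pselect (exists y, (S `\` A) y); first exact: yes.
  exfalso; apply: hAS; apply/seteqP; split => y hy.
  - move: hy; rewrite EA => hy. have [j _ Vj] := hy 0%N Logic.I.
    have [ps Eps] := hV 0%N j. rewrite Eps in Vj. exact: (proj1 Vj).
  - apply: contrapT => nA. apply: no; exists y; split; [exact: hy | exact: nA].
set U := S `\` A.
have hI' := hI.
have [[rfl anti tr to] mono wf] := hle.
have [hIc hIeq hI0 hIadd hImul] := hI'.
have [hG1 hG2 hG3 hG4] := hG.
have GI : forall g : cp, g \in G -> I g.
  move=> g gG. apply/hG2. apply: (ig_in S _ _ (hG1 g gG)). exact: gG.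
have LMU : forall (g : cp) (a : monom n), is_LM le S g a -> (forall y, S y -> (g@_a) y <> 0) -> is_LM le U g a.
  move=> g a [h1 h2] hnv; split.
  - exists y0; [exact: Uy0 | exact: hnv y0 (US y0 Uy0)].
  - move=> d [y Uy hy]. apply: h2. exists y; [exact: US y Uy | exact: hy].
split.
- move=> g gG. exact: (inC_sub U S g US (hG1 g gG)).
- move=> p; split.
  + apply: (ig_trans U _ I p) => q Iq. apply: (ig_sub U S _ q US). exact: (iffLR (hG2 q) Iq).
  + apply: (ig_mono U _ I p) => g gG. exact: GI.
- move=> p; split.
  + apply: ig_mono => t [g gG hLT]. exists g; split; last exact: hLT.
    apply: (ig_in U I g (inC_sub U S g US (hG1 g gG))). exact: GI.
  + apply: ig_trans => t [h [hJ [a [hLMa ->]]]].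
    have [hC [s [hs he]]] := hJ.
    have [hLa1 hLa2] := hLMa.
    have [x Ux hx] := hLa1.
    have Sx : S x := US x Ux.
    have [HI HE] := lift_sum S I x s hI' (fun hg hin => proj2 (hs hg hin)).
    set H := sumP [seq (lift x c.1, c.2) | c <- s] in HI HE.
    rewrite sumPE in he.
    have he2 := iffLR (peqE U h _) he x Ux.
    have Hx : forall d, (H@_d) x = (h@_d) x.
      move=> d. apply: (etrans (esym (evpE x H d))).
      apply: (etrans (congr1 (mcoeff d) (etrans HE (esym he2)))). exact: evpE.
    have nzHa : nz_on S (H@_a) by exists x; [exact: Sx | rewrite Hx; exact: hx].
    have [b hLMb] := LM_exists le S H a tr to nzHa.
    have [g gG [a' [hLMg ha'a]]] := key le S I G hle hI' hG x Sx b H HI hLMb a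
      (introN eqP (fun E => hx (etrans (esym (Hx a)) E)))
      (fun d hd => hLa2 d (ex_intro2 _ _ x Ux (fun E => (elimN eqP hd) (etrans (Hx d) E)))).
    have [a'' [hLM'' hnv]] := hG4 g gG.
    have Ea : a'' = a' := LM_unique le S g a'' a' anti hLM'' hLMg.
    rewrite Ea in hnv.
    have hnvU : forall y, U y -> (g@_a') y != 0 by move=> y Uy; apply/eqP; exact: hnv y (US y Uy).
    pose e := (a - a')%MM.
    pose cc := fun y => (h@_a) y * ((g@_a') y)^-1.
    have ccC : {within U, continuous cc}.
      have := wM U _ _ (hC a) (wV U (g@_a') (inC_sub U S g US (hG1 g gG) a') hnvU). exact.
    split; first exact: (inC_scaleX U (h@_a) a (hC a)).
    exists [:: (cc *: 'X_[e], g@_a' *: 'X_[a'])]; split.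
    * move=> hg; rewrite mem_seq1 => /eqP -> /=; split; first exact: (inC_scaleX U cc e ccC).
      exists g; first exact: gG. exists a'; split; last by [].
      exact: LMU g a' hLMg hnv.
    * move=> d y Uy. have Ea2 : mpoly.mnm_add a' e = a by rewrite /e addmC submK.
      have PE : (g@_a' *: 'X_[a'] : cp) * 'X_[e] = g@_a' *: 'X_[a] by rewrite -scalerAl -mpolyXD Ea2.
      rewrite big_seq1 /=. rewrite scaleXM. rewrite PE. rewrite [in LHS](mcoeffZ (h@_a)). rewrite (mcoeffZ (g@_a')). rewrite (@mcoeffX n ('rV[R]_m -> Cplx R) a d). 
      case: eqP => _.
      - change ((h@_a) y * 1 = cc y * ((g@_a') y * 1)).
        rewrite mulr1 mulr1 /cc divfK; first by []. exact: hnvU y Uy.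
      - change ((h@_a) y * 0 = cc y * ((g@_a') y * 0)).
        by rewrite !mulr0.
- move=> g gG. have [a [hLMa hnv]] := hG4 g gG. exists a; split.
  + exact: LMU g a hLMa hnv.
  + move=> y Uy. exact: hnv y (US y Uy).
Qed.
End Aux.

Theorem mainTheorem6 (R : realType) (m n : nat) (le : rel (monom n))
    (S : set 'rV[R]_m) (I : set (cpoly R m n)) (G : seq (cpoly R m n)) :
  monomial_order le ->
  condensed S ->
  is_ideal S I ->
  groebner_basis le S I G ->
  forall A : set 'rV[R]_m, measure_zero S A ->
    groebner_basis le (S `\` A) (ideal_gen (S `\` A) I) G.
Proof. exact: (main_aux R m n le S I G). Qed.
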